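(* Let $k$ be a commutative artin ring, let $\Lambda$ be an artin $k$-algebra, let $X$ and $Y$ be finite length $\Lambda$-modules, and let $M\subseteq X\oplus Y$ be a submodule. Then there exist submodules $X'\subseteq X$ and $Y'\subseteq Y$ such that $M\leq_{\mathrm{deg}}X'\oplus Y'$.
   Context: For finite length $\Lambda$-modules $M,N$, one writes $M\leq_{\mathrm{deg}}N$ if there exist a finite length $\Lambda$-module $Z$ and a short exact sequence of $\Lambda$-modules $0\to Z\to M\oplus Z\to N\to 0$. *)

(* Defs.v *)
From HB Require Import structures.
From mathcomp Require Import all_boot all_order all_algebra.
Set Implicit Arguments. Unset Strict Implicit. Unset Printing Implicit Defensive.
Import GRing.Theory.
Local Open Scope ring_scope.

Section SubModule.
Variables (R : pzRingType) (V : lmodType R) (S : submodClosed V).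
Record subm : Type := Subm { subm_val : V; subm_prop : subm_val \in S }.
HB.instance Definition _ := [isSub for subm_val].
HB.instance Definition _ := [Choice of subm by <:].
HB.instance Definition _ := [SubChoice_isSubLmodule of subm by <:].
End SubModule.

Definition finite_length (R : pzRingType) (V : lmodType R) : Prop :=
  exists n : nat, forall (m : nat) (c : nat -> submodClosed V),
    (forall i, (i < m)%N ->
       {subset c i <= c i.+1} /\ exists x, x \in c i.+1 /\ x \notin c i) ->
    (m <= n)%N.

(* Artinian commutative ring: descending chain condition on ideals
   (ideals of k = k-submodules of the regular module k^o). *)
Definition artinian_ring (k : comNzRingType) : Prop :=
  forall c : nat -> submodClosed (k^o),
    (forall i, {subset c i.+1 <= c i}) ->
    exists N, forall i, (N <= i)%N -> c i =i c N.

(* Artin k-algebra (k artinian): Lambda is a k-algebra which is finitely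
   generated as a k-module. *)
Definition fg_over (k : comNzRingType) (L : algType k) : Prop :=
  exists s : seq L, forall x : L,
    exists a : nat -> k, x = \sum_(i < size s) a i *: s`_i.

Definition deg_le (R : pzRingType) (M N : lmodType R) : Prop :=
  exists Z : lmodType R, finite_length Z /\
    exists (f : {linear Z -> (M * Z)%type}) (g : {linear (M * Z)%type -> N}),
      injective f /\ (forall y : N, exists w, g w = y) /\
      (forall w : (M * Z)%type, g w = 0 <-> exists z, f z = w).

(* Main.v *)
Require Import Defs.
From HB Require Import structures.
From mathcomp Require Import all_boot all_order all_algebra.
From Stdlib Require Import ClassicalEpsilon.
Set Implicit Arguments. Unset Strict Implicit. Unset Printing Implicit Defensive.
Import GRing.Theory.
Local Open Scope ring_scope.

Definition pb (P : Prop) : bool := if excluded_middle_informative P then true else false.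
Lemma pbP (P : Prop) : reflect P (pb P).
Proof. rewrite /pb; case: excluded_middle_informative => h; constructor => //. Qed.

Section S.
Variables (R : pzRingType) (X Y : lmodType R) (M : submodClosed (X * Y)%type).
Definition Xp : pred X := fun x => (x, 0) \in M.
Lemma Xp_closed : submod_closed Xp.
Proof.
split; first by rewrite unfold_in /Xp (rpred0 M).
move=> a u v; rewrite !unfold_in /Xp => hu hv.
have := rpredD (rpredZ a hu) hv.
move=> h; congr (_ \in M): h; congr (_, _); rewrite /= ?scaler0 ?addr0 //.
Qed.
HB.instance Definition _ := GRing.isSubmodClosed.Build R X Xp (GRing.submod_closed_semi Xp_closed).
Definition XpS := GRing.SubmodClosed.clone R X Xp _.

Definition Yp : pred Y := fun y => pb (exists x, (x, y) \in M).
Lemma Yp_closed : submod_closed Yp.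
Proof.
split; first by rewrite unfold_in /Yp; apply/pbP; exists 0; exact: (rpred0 M).
move=> a u v; rewrite !unfold_in /Yp => /pbP [x hx] /pbP [x' hx']; apply/pbP.
exists (a *: x + x').
by have := rpredD (rpredZ a hx) hx'.
Qed.
HB.instance Definition _ := GRing.isSubmodClosed.Build R Y Yp (GRing.submod_closed_semi Yp_closed).
Definition YpS := GRing.SubmodClosed.clone R Y Yp _.
End S.

Section FL.
Variables (R : pzRingType) (X : lmodType R) (S : submodClosed X)
  (c : nat -> submodClosed (subm S)) (i : nat).
Definition cp : pred X := fun x => pb (exists u : subm S, val u = x /\ u \in c i).
Lemma cp_closed : submod_closed cp.
Proof.
split; first by rewrite unfold_in /cp; apply/pbP; exists 0; split => //; exact: rpred0.
move=> a u v; rewrite !unfold_in /cp => /pbP [x [<- hx]] /pbP [x' [<- hx']]; apply/pbP.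
by exists (a *: x + x'); split => //; rewrite rpredD ?rpredZ.
Qed.
HB.instance Definition _ := GRing.isSubmodClosed.Build R X cp (GRing.submod_closed_semi cp_closed).
Definition cpS := GRing.SubmodClosed.clone R X cp _.
End FL.

Lemma fl_sub (R : pzRingType) (X : lmodType R) (S : submodClosed X) :
  finite_length X -> finite_length (subm S).
Proof.
move=> [n hn]; exists n => m c hc; apply: (hn m (cpS c)) => j hj.
have [hs [u [hu1 hu2]]] := hc j hj; split.
  move=> x; rewrite !unfold_in /cp => /pbP [w [hw1 hw2]]; apply/pbP.
  by exists w; split => //; apply: hs.
exists (val u); split; rewrite unfold_in /cp; first by apply/pbP; exists u.
apply/pbP => -[w [hw1 hw2]]; move/val_inj: hw1 => hw1; subst w.
by rewrite hw2 in hu2.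
Qed.

Section Maps.
Variables (R : pzRingType) (X Y : lmodType R) (M : submodClosed (X * Y)%type).
Let XS := XpS M.
Let YS := YpS M.
Definition fmap (z : subm XS) : (subm M * subm XS)%type :=
  (@Subm _ _ M (val z, 0) (subm_prop z), 0).
Lemma fmap_lin : linear_for *:%R fmap.
Proof.
move=> a x y; congr (_, _); last by rewrite /= scaler0 addr0.
by apply: val_inj => /=; congr (_, _); rewrite /= ?scaler0 ?addr0.
Qed.
HB.instance Definition _ := GRing.isLinear.Build R (subm XS) (subm M * subm XS)%type _ fmap fmap_lin.

Lemma snd_in (m : subm M) : (val m).2 \in YS.
Proof.
rewrite unfold_in /= /Yp; apply/pbP; exists (val m).1.
by rewrite -surjective_pairing; exact: subm_prop.
Qed.
Definition gmap (w : (subm M * subm XS)%type) : (subm XS * subm YS)%type :=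
  (w.2, @Subm _ _ YS (val w.1).2 (snd_in w.1)).
Lemma gmap_lin : linear_for *:%R gmap.
Proof.
move=> a x y; congr (_, _); by apply: val_inj.
Qed.
HB.instance Definition _ := GRing.isLinear.Build R (subm M * subm XS)%type (subm XS * subm YS)%type _ gmap gmap_lin.
End Maps.

Theorem lemma2p2 (k : comNzRingType) (L : algType k)
  (hk : artinian_ring k) (hL : fg_over L)
  (X Y : lmodType L) (hX : finite_length X) (hY : finite_length Y)
  (M : submodClosed (X * Y)%type) :
  exists (X' : submodClosed X) (Y' : submodClosed Y),
    deg_le (subm M) (subm X' * subm Y')%type.
Proof.
exists (XpS M), (YpS M), (subm (XpS M)); split; first exact: fl_sub.
exists (@fmap _ _ _ M : {linear _ -> _}), (@gmap _ _ _ M : {linear _ -> _}); split; last split.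
- move=> z1 z2 /= [h]; exact: val_inj.
- move=> [z yy]; have := subm_prop yy; rewrite unfold_in /= /Yp => /pbP [x hx].
  exists (@Subm _ _ M (x, val yy) hx, z); congr (_, _); exact: val_inj.
- move=> [m z]; split.
  + move=> /= [] -> h0.
    have hm : val m = ((val m).1, 0).
      by rewrite [LHS]surjective_pairing; congr (_, _); exact: h0.
    have hx : (val m).1 \in XpS M by rewrite unfold_in /= /Xp -hm; exact: subm_prop.
    exists (@Subm _ _ (XpS M) _ hx); congr (_, _); exact: val_inj.
  + move=> [z0 <-] /=; congr (_, _); exact: val_inj.
Qed.
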